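(* Let $0\le t_1<t_2$, let $m,k>0$ be constants, let $f\in C[t_1,t_2]$, and let $f^1,f^2\in\mathbb{R}$ be given constants. For $u\in C^2[t_1,t_2]$ define $$I^\tau[u]=\frac{m}{2}\,[u',u']_{t_1}^{t_2}+\frac{k}{2}\,[u,u]_{t_1}^{t_2}-[f,u]_{t_1}^{t_2}-f^1\,u(t_2)+f^2\,u(t_1).$$ Suppose $u\in C^2[t_1,t_2]$ is a stationary point of $I^\tau$, i.e. $\frac{d}{d\varepsilon}I^\tau[u+\varepsilon\eta]\big|_{\varepsilon=0}=0$ for every $\eta\in C^2[t_1,t_2]$. Then $$m u''(s)+k u(s)=f(s),\quad s\in(t_1,t_2),\qquad u'(t_1)=f^1/m,\quad u'(t_2)=f^2/m .$$
   Context: For an interval $[t_1,t_2]$ with $t_1\ge0$ and functions $g,h\in L^2(t_1,t_2)$, the convolution over $[t_1,t_2]$ is defined as $$[g,h]_{t_1}^{t_2}=\int_0^{t_2-t_1}g(t_1+s)\,h(t_2-s)\,ds=\int_{t_1}^{t_2}g(s)\,h(t_1+t_2-s)\,ds .$$ (In the paper the last two terms of $I^\tau$ are written as $-[\tilde f^1-\tilde f^2,u]_{t_1}^{t_2}$ with $\tilde f^1=f^1\delta(s-t_1)$, $\tilde f^2=f^2\delta(s-t_2)$, which by convention evaluate to $-f^1u(t_2)+f^2u(t_1)$.) *)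

(* Defs.v *)
From Stdlib Require Import Reals.
From Coquelicot Require Import Coquelicot.
Open Scope R_scope.

Definition continuous_on_cc (a b : R) (f : R -> R) : Prop :=
  forall x, a <= x <= b ->
    filterlim f (within (fun y => a <= y <= b) (locally x)) (locally (f x)).

Definition deriv_on_cc (a b : R) (f f' : R -> R) : Prop :=
  forall x, a <= x <= b ->
    filterlim (fun y => (f y - f x) / (y - x))
      (within (fun y => a <= y <= b /\ y <> x) (locally x)) (locally (f' x)).

Definition C2_on (a b : R) (u u1 u2 : R -> R) : Prop :=
  continuous_on_cc a b u /\ continuous_on_cc a b u1 /\ continuous_on_cc a b u2 /\
  deriv_on_cc a b u u1 /\ deriv_on_cc a b u1 u2.

(* Convolution over [t1,t2]: [g,h]_{t1}^{t2} = \int_{t1}^{t2} g(s) h(t1+t2-s) ds. *)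
Definition conv (t1 t2 : R) (g h : R -> R) : R :=
  RInt (fun s => g s * h (t1 + t2 - s)) t1 t2.

(* The functional I^tau, evaluated at u whose derivative is u1. *)
Definition Itau (t1 t2 m k f1 f2 : R) (f : R -> R) (u u1 : R -> R) : R :=
  m / 2 * conv t1 t2 u1 u1 + k / 2 * conv t1 t2 u u
  - conv t1 t2 f u - f1 * u t2 + f2 * u t1.

(* Main.v *)
Require Import Defs.
From Stdlib Require Import Reals Lra.
From Coquelicot Require Import Coquelicot.
Open Scope R_scope.

Lemma ball_R (x e y : R) : ball x e y <-> Rabs (y - x) < e.
Proof. reflexivity. Qed.

Lemma within_cc_eps (a b x : R) (P : R -> Prop) (g : R -> R) (l : R) :
  filterlim g (within P (locally x)) (locally l) ->
  forall eps, 0 < eps -> exists d, 0 < d /\ forall y, P y -> Rabs (y - x) < d -> Rabs (g y - l) < eps.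
Proof.
  intros H eps Heps.
  destruct (proj1 (filterlim_locally g l) H (mkposreal eps Heps)) as [d Hd].
  exists d; split; [apply cond_pos|]. intros y Py Hy. apply (Hd y Hy Py).
Qed.

Lemma within_of_eps (x : R) (P : R -> Prop) (g : R -> R) (l : R) :
  (forall eps, 0 < eps -> exists d, 0 < d /\ forall y, P y -> Rabs (y - x) < d -> Rabs (g y - l) < eps) ->
  filterlim g (within P (locally x)) (locally l).
Proof.
  intros H. apply filterlim_locally. intros eps.
  destruct (H eps (cond_pos eps)) as [d [Hd H']].
  exists (mkposreal d Hd). intros y Hy Py. apply (H' y Py Hy).
Qed.

Lemma cont_eps (f : R -> R) (x : R) :
  continuous f x -> forall eps, 0 < eps -> exists d, 0 < d /\ forall y, Rabs (y - x) < d -> Rabs (f y - f x) < eps.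
Proof.
  intros H eps Heps.
  destruct (proj1 (filterlim_locally f (f x)) H (mkposreal eps Heps)) as [d Hd].
  exists d; split; [apply cond_pos|]. intros y Hy. apply (Hd y Hy).
Qed.

Lemma eps_cont (f : R -> R) (x : R) :
  (forall eps, 0 < eps -> exists d, 0 < d /\ forall y, Rabs (y - x) < d -> Rabs (f y - f x) < eps) -> continuous f x.
Proof.
  intros H. apply filterlim_locally. intros eps.
  destruct (H eps (cond_pos eps)) as [d [Hd H']].
  exists (mkposreal d Hd). intros y Hy. apply (H' y Hy).
Qed.
Lemma cont_cc_of (a b : R) (F : R -> R) : (forall x, continuous F x) -> continuous_on_cc a b F.
Proof.
  intros H x _. apply within_of_eps. intros eps Heps.
  destruct (cont_eps F x (H x) eps Heps) as [d [Hd H']]. exists d. split; auto.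
Qed.

Lemma deriv_cc_of (a b : R) (F F1 : R -> R) : (forall x, is_derive F x (F1 x)) -> deriv_on_cc a b F F1.
Proof.
  intros H x _. apply within_of_eps. intros eps Heps.
  destruct (proj1 (is_derive_Reals F x (F1 x)) (H x) eps Heps) as [d Hd].
  exists d. split; [apply cond_pos|]. intros y [_ Hyx] Hy.
  specialize (Hd (y - x)). replace (x + (y - x)) with y in Hd by ring. apply Hd; auto.
  intro; apply Hyx; lra.
Qed.

Definition RD (G : R -> R) (x l : R) := forall eps, 0 < eps -> exists d, 0 < d /\
  forall y, x < y < x + d -> Rabs ((G y - G x) / (y - x) - l) < eps.
Definition LD (G : R -> R) (x l : R) := forall eps, 0 < eps -> exists d, 0 < d /\
  forall y, x - d < y < x -> Rabs ((G y - G x) / (y - x) - l) < eps.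

Lemma RL_derive (G : R -> R) (x l : R) : RD G x l -> LD G x l -> is_derive G x l.
Proof.
  intros HR HL. apply is_derive_Reals. intros eps Heps.
  destruct (HR eps Heps) as [d1 [Hd1 H1]]. destruct (HL eps Heps) as [d2 [Hd2 H2]].
  assert (Hd : 0 < Rmin d1 d2) by (apply Rmin_pos; auto).
  exists (mkposreal _ Hd). intros h Hh0 Hh. simpl in Hh.
  assert (Hm1 := Rmin_l d1 d2). assert (Hm2 := Rmin_r d1 d2).
  destruct (Rlt_or_le 0 h) as [Hp|Hn].
  - rewrite Rabs_right in Hh by lra. specialize (H1 (x + h)). replace (x + h - x) with h in H1 by ring.
    apply H1; lra.
  - assert (h < 0) by lra. rewrite Rabs_left in Hh by lra. specialize (H2 (x + h)). replace (x + h - x) with h in H2 by ring.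
    apply H2; lra.
Qed.

Lemma derive_RD (G : R -> R) (x l : R) : is_derive G x l -> RD G x l.
Proof.
  intros H eps Heps. destruct (proj1 (is_derive_Reals G x l) H eps Heps) as [d Hd].
  exists d; split; [apply cond_pos|]. intros y Hy. specialize (Hd (y - x)).
  replace (x + (y - x)) with y in Hd by ring. apply Hd. lra. rewrite Rabs_right; lra.
Qed.

Lemma derive_LD (G : R -> R) (x l : R) : is_derive G x l -> LD G x l.
Proof.
  intros H eps Heps. destruct (proj1 (is_derive_Reals G x l) H eps Heps) as [d Hd].
  exists d; split; [apply cond_pos|]. intros y Hy. specialize (Hd (y - x)).
  replace (x + (y - x)) with y in Hd by ring. apply Hd. lra. rewrite Rabs_left; lra.
Qed.

Lemma RD_ext (G P : R -> R) (x l r : R) : 0 < r -> (forall y, x <= y < x + r -> G y = P y) -> RD P x l -> RD G x l.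
Proof.
  intros Hr He H eps Heps. destruct (H eps Heps) as [d [Hd H']].
  exists (Rmin d r). split. apply Rmin_pos; auto.
  intros y Hy. assert (Hm1 := Rmin_l d r). assert (Hm2 := Rmin_r d r).
  rewrite (He y) by lra. rewrite (He x) by lra. apply H'; lra.
Qed.

Lemma LD_ext (G P : R -> R) (x l r : R) : 0 < r -> (forall y, x - r < y <= x -> G y = P y) -> LD P x l -> LD G x l.
Proof.
  intros Hr He H eps Heps. destruct (H eps Heps) as [d [Hd H']].
  exists (Rmin d r). split. apply Rmin_pos; auto.
  intros y Hy. assert (Hm1 := Rmin_l d r). assert (Hm2 := Rmin_r d r).
  rewrite (He y) by lra. rewrite (He x) by lra. apply H'; lra.
Qed.

Lemma cc_RD (a b : R) (F F1 : R -> R) (x : R) : deriv_on_cc a b F F1 -> a <= x < b -> RD F x (F1 x).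
Proof.
  intros H Hx eps Heps. destruct (within_cc_eps a b x _ _ _ (H x ltac:(lra)) eps Heps) as [d [Hd H']].
  exists (Rmin d (b - x)). split. apply Rmin_pos; lra.
  intros y Hy. assert (Hm1 := Rmin_l d (b - x)). assert (Hm2 := Rmin_r d (b - x)).
  apply H'. split; lra. rewrite Rabs_right; lra.
Qed.

Lemma cc_LD (a b : R) (F F1 : R -> R) (x : R) : deriv_on_cc a b F F1 -> a < x <= b -> LD F x (F1 x).
Proof.
  intros H Hx eps Heps. destruct (within_cc_eps a b x _ _ _ (H x ltac:(lra)) eps Heps) as [d [Hd H']].
  exists (Rmin d (x - a)). split. apply Rmin_pos; lra.
  intros y Hy. assert (Hm1 := Rmin_l d (x - a)). assert (Hm2 := Rmin_r d (x - a)).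
  apply H'. split; lra. rewrite Rabs_left; lra.
Qed.
Definition clamp (a b x : R) := Rmax a (Rmin b x).

Lemma clamp_in (a b x : R) : a <= x <= b -> clamp a b x = x.
Proof. intros. unfold clamp. rewrite Rmin_right by lra. rewrite Rmax_right; lra. Qed.
Lemma clamp_lo (a b x : R) : a <= b -> x <= a -> clamp a b x = a.
Proof. intros. unfold clamp. rewrite Rmin_right by lra. rewrite Rmax_left; lra. Qed.
Lemma clamp_hi (a b x : R) : a <= b -> b <= x -> clamp a b x = b.
Proof. intros. unfold clamp. rewrite Rmin_left by lra. rewrite Rmax_right; lra. Qed.
Lemma clamp_range (a b x : R) : a <= b -> a <= clamp a b x <= b.
Proof. intros. unfold clamp. destruct (Rle_dec x b).
  rewrite Rmin_right by lra. destruct (Rle_dec a x). rewrite Rmax_right; lra. rewrite Rmax_left; lra.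
  rewrite Rmin_left by lra. rewrite Rmax_right; lra. Qed.
Lemma clamp_lip (a b x y : R) : a <= b -> Rabs (clamp a b y - clamp a b x) <= Rabs (y - x).
Proof.
  intros Hab. destruct (Rle_dec y a); destruct (Rle_dec x a).
  - rewrite (clamp_lo a b x), (clamp_lo a b y) by lra. rewrite Rminus_eq_0, Rabs_R0. apply Rabs_pos.
  - destruct (Rle_dec x b).
    + rewrite (clamp_lo a b y), (clamp_in a b x) by lra. rewrite !Rabs_left1 by lra. lra.
    + rewrite (clamp_lo a b y), (clamp_hi a b x) by lra. rewrite !Rabs_left1 by lra. lra.
  - destruct (Rle_dec y b).
    + rewrite (clamp_lo a b x), (clamp_in a b y) by lra. rewrite !Rabs_right by lra. lra.
    + rewrite (clamp_lo a b x), (clamp_hi a b y) by lra. rewrite !Rabs_right by lra. lra.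
  - destruct (Rle_dec y b); destruct (Rle_dec x b).
    + rewrite (clamp_in a b x), (clamp_in a b y) by lra. lra.
    + rewrite (clamp_in a b y), (clamp_hi a b x) by lra. rewrite !Rabs_left1 by lra. lra.
    + rewrite (clamp_hi a b y), (clamp_in a b x) by lra. rewrite !Rabs_right by lra. lra.
    + rewrite (clamp_hi a b x), (clamp_hi a b y) by lra. rewrite Rminus_eq_0, Rabs_R0. apply Rabs_pos.
Qed.

Definition ext (a b : R) (F F1 F2 : R -> R) (x : R) :=
  F (clamp a b x) + F1 (clamp a b x) * (x - clamp a b x) + F2 (clamp a b x) * (x - clamp a b x) ^ 2 / 2.

Lemma ext_in a b F F1 F2 x : a <= x <= b -> ext a b F F1 F2 x = F x.
Proof. intros. unfold ext. rewrite clamp_in by lra. field. Qed.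
Lemma ext_lo a b F F1 F2 x : a <= b -> x <= a -> ext a b F F1 F2 x = F a + F1 a * (x - a) + F2 a * (x - a) ^ 2 / 2.
Proof. intros. unfold ext. rewrite clamp_lo by lra. field. Qed.
Lemma ext_hi a b F F1 F2 x : a <= b -> b <= x -> ext a b F F1 F2 x = F b + F1 b * (x - b) + F2 b * (x - b) ^ 2 / 2.
Proof. intros. unfold ext. rewrite clamp_hi by lra. field. Qed.

Lemma quad_derive (c p q r x : R) : is_derive (fun y => p + q * (y - c) + r * (y - c) ^ 2 / 2) x (q + r * (x - c)).
Proof. auto_derive; auto. field. Qed.

Lemma ext_derive a b F F1 F2 : a < b -> deriv_on_cc a b F F1 -> forall x,
  is_derive (ext a b F F1 F2) x (F1 (clamp a b x) + F2 (clamp a b x) * (x - clamp a b x)).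
Proof.
  intros Hab HF x.
  destruct (Rlt_or_le x a) as [Hxa|Hxa].
  - rewrite clamp_lo by lra.
    apply is_derive_ext_loc with (f := fun y => F a + F1 a * (y - a) + F2 a * (y - a) ^ 2 / 2).
    + exists (mkposreal (a - x) ltac:(lra)). intros y Hy. assert (Hy' : Rabs (y - x) < a - x) by exact Hy.
      apply Rabs_lt_between in Hy'. rewrite ext_lo by lra. reflexivity.
    + apply quad_derive.
  - destruct (Rlt_or_le b x) as [Hxb|Hxb].
    + rewrite clamp_hi by lra.
      apply is_derive_ext_loc with (f := fun y => F b + F1 b * (y - b) + F2 b * (y - b) ^ 2 / 2).
      * exists (mkposreal (x - b) ltac:(lra)). intros y Hy. assert (Hy' : Rabs (y - x) < x - b) by exact Hy.
        apply Rabs_lt_between in Hy'. rewrite ext_hi by lra. reflexivity.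
      * apply quad_derive.
    + rewrite clamp_in by lra. replace (F1 x + F2 x * (x - x)) with (F1 x) by ring.
      apply RL_derive.
      * destruct (Rlt_or_le x b) as [Hlt|Hle].
        -- apply RD_ext with (P := F) (r := b - x). lra. intros y Hy. apply ext_in; lra.
           apply (cc_RD a b F F1 x HF). lra.
        -- assert (x = b) by lra. subst x.
           apply RD_ext with (P := fun y => F b + F1 b * (y - b) + F2 b * (y - b) ^ 2 / 2) (r := 1). lra.
           intros y Hy. apply ext_hi; lra.
           assert (Hq := quad_derive b (F b) (F1 b) (F2 b) b). replace (F1 b + F2 b * (b - b)) with (F1 b) in Hq by ring. apply derive_RD, Hq.
      * destruct (Rlt_or_le a x) as [Hlt|Hle].
        -- apply LD_ext with (P := F) (r := x - a). lra. intros y Hy. apply ext_in; lra.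
           apply (cc_LD a b F F1 x HF). lra.
        -- assert (x = a) by lra. subst x.
           apply LD_ext with (P := fun y => F a + F1 a * (y - a) + F2 a * (y - a) ^ 2 / 2) (r := 1). lra.
           intros y Hy. apply ext_lo; lra.
           assert (Hq := quad_derive a (F a) (F1 a) (F2 a) a). replace (F1 a + F2 a * (a - a)) with (F1 a) in Hq by ring. apply derive_LD, Hq.
Qed.
Lemma clamp_cont (a b : R) (F : R -> R) : a <= b -> continuous_on_cc a b F ->
  forall x, continuous (fun y => F (clamp a b y)) x.
Proof.
  intros Hab HF x. apply eps_cont. intros eps Heps.
  assert (Hc := clamp_range a b x Hab).
  destruct (within_cc_eps a b _ _ _ _ (HF _ Hc) eps Heps) as [d [Hd H']].
  exists d. split; auto. intros y Hy. apply H'. apply clamp_range; auto.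
  eapply Rle_lt_trans. apply clamp_lip; auto. auto.
Qed.

Lemma cont_refl (c x : R) : continuous (fun s => c - s) x.
Proof. apply eps_cont. intros eps He. exists eps. split; auto. intros y Hy.
  replace (c - y - (c - x)) with (- (y - x)) by ring. rewrite Rabs_Ropp. auto. Qed.

Lemma cont_comb (c d : R -> R) (e x : R) : continuous c x -> continuous d x ->
  continuous (fun s => c s + e * d s) x.
Proof.
  intros Hc Hd. apply (continuous_plus c (fun s => e * d s)); auto.
  apply (continuous_mult (fun _ => e) d); auto. apply continuous_const.
Qed.

Lemma cont_mul (c d : R -> R) (x : R) : continuous c x -> continuous d x ->
  continuous (fun s => c s * d s) x.
Proof. intros Hc Hd. apply (continuous_mult c d); auto. Qed.

Lemma cont_reflc (h : R -> R) (c : R) : (forall x, continuous h x) -> forall x, continuous (fun s => h (c - s)) x.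
Proof. intros Hh x. apply (continuous_comp (fun s => c - s) h). apply cont_refl. apply Hh. Qed.

Lemma ex_cont (t1 t2 : R) (g : R -> R) : (forall x, continuous g x) -> ex_RInt g t1 t2.
Proof. intros Hg. apply (@ex_RInt_continuous R_CompleteNormedModule). intros z _. auto. Qed.

Lemma ex_conv (t1 t2 : R) (g h : R -> R) : (forall x, continuous g x) -> (forall x, continuous h x) ->
  ex_RInt (fun s => g s * h (t1 + t2 - s)) t1 t2.
Proof.
  intros Hg Hh. apply ex_cont. intros z. apply cont_mul; auto. apply cont_reflc; auto.
Qed.

Lemma RInt_lin (g h : R -> R) (e a b : R) : ex_RInt g a b -> ex_RInt h a b ->
  RInt (fun s => g s + e * h s) a b = RInt g a b + e * RInt h a b.
Proof.
  intros Hg Hh.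
  apply is_RInt_unique.
  apply (is_RInt_plus g (fun s => scal e (h s))). apply (@RInt_correct R_CompleteNormedModule); auto.
  apply (is_RInt_scal h). apply (@RInt_correct R_CompleteNormedModule); auto.
Qed.

Lemma RInt_extR (f g : R -> R) (a b : R) : (forall x, f x = g x) -> RInt f a b = RInt g a b.
Proof. intros H. apply RInt_ext. intros; apply H. Qed.

Lemma conv_lin_r (t1 t2 e : R) (a c d : R -> R) : (forall x, continuous a x) -> (forall x, continuous c x) -> (forall x, continuous d x) ->
  conv t1 t2 a (fun s => c s + e * d s) = conv t1 t2 a c + e * conv t1 t2 a d.
Proof.
  intros Ha Hc Hd. unfold conv.
  rewrite <- RInt_lin by (apply ex_conv; auto).
  apply RInt_extR. intros; ring.
Qed.

Lemma conv_lin_l (t1 t2 e : R) (a b h : R -> R) : (forall x, continuous a x) -> (forall x, continuous b x) -> (forall x, continuous h x) ->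
  conv t1 t2 (fun s => a s + e * b s) h = conv t1 t2 a h + e * conv t1 t2 b h.
Proof.
  intros Ha Hc Hd. unfold conv.
  rewrite <- RInt_lin by (apply ex_conv; auto).
  apply RInt_extR. intros; ring.
Qed.

Lemma conv_quad (t1 t2 e : R) (a b c d : R -> R) : (forall x, continuous a x) -> (forall x, continuous b x) ->
  (forall x, continuous c x) -> (forall x, continuous d x) ->
  conv t1 t2 (fun s => a s + e * b s) (fun s => c s + e * d s) =
  conv t1 t2 a c + e * (conv t1 t2 a d + conv t1 t2 b c) + e ^ 2 * conv t1 t2 b d.
Proof.
  intros Ha Hb Hc Hd. rewrite conv_lin_l; auto.
  rewrite !conv_lin_r; auto. ring.
  intros; apply cont_comb; auto.
Qed.

Lemma conv_ext (t1 t2 : R) (g g' h h' : R -> R) : t1 < t2 ->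
  (forall s, t1 <= s <= t2 -> g s = g' s) -> (forall s, t1 <= s <= t2 -> h s = h' s) ->
  conv t1 t2 g h = conv t1 t2 g' h'.
Proof.
  intros Ht Hg Hh. unfold conv. apply RInt_ext. rewrite Rmin_left, Rmax_right by lra.
  intros x Hx. rewrite Hg, Hh by lra. reflexivity.
Qed.

Lemma RInt_scalR (h : R -> R) (e a b : R) : ex_RInt h a b ->
  RInt (fun s => e * h s) a b = e * RInt h a b.
Proof.
  intros Hh. apply is_RInt_unique.
  apply (is_RInt_scal h). apply (@RInt_correct R_CompleteNormedModule); auto.
Qed.

Lemma RInt_refl (t1 t2 : R) (g : R -> R) : (forall x, continuous g x) ->
  RInt (fun s => g (t1 + t2 - s)) t1 t2 = RInt g t1 t2.
Proof.
  intros Hg.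
  assert (H := RInt_comp_lin g (-1) (t1 + t2) t1 t2 ltac:(apply ex_cont; auto)).
  replace (-1 * t1 + (t1 + t2)) with t2 in H by ring.
  replace (-1 * t2 + (t1 + t2)) with t1 in H by ring.
  rewrite <- (opp_RInt_swap g t1 t2) in H by (apply ex_cont; auto).
  rewrite (RInt_extR _ (fun y => (-1) * g (t1 + t2 - y))) in H.
  rewrite RInt_scalR in H.
  change (-1 * RInt (fun y => g (t1 + t2 - y)) t1 t2 = - RInt g t1 t2) in H. lra.
  apply ex_cont. intros; apply cont_reflc; auto.
  intros x. change (-1 * g (-1 * x + (t1 + t2)) = -1 * g (t1 + t2 - x)).
  replace (-1 * x + (t1 + t2)) with (t1 + t2 - x) by ring. ring.
Qed.
Lemma deriv_cont (P P1 : R -> R) : (forall x, is_derive P x (P1 x)) -> forall x, continuous P x.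
Proof. intros H x. apply (@ex_derive_continuous R_AbsRing R_NormedModule). exists (P1 x). apply H. Qed.

Lemma parts (P P1 Q Q1 : R -> R) (a b : R) :
  (forall x, is_derive P x (P1 x)) -> (forall x, is_derive Q x (Q1 x)) ->
  (forall x, continuous P1 x) -> (forall x, continuous Q1 x) ->
  RInt (fun s => P1 s * Q s + P s * Q1 s) a b = P b * Q b - P a * Q a.
Proof.
  intros HP HQ HP1 HQ1. apply is_RInt_unique.
  apply (@is_RInt_derive R_CompleteNormedModule (fun s => P s * Q s)).
  - intros x _. apply (is_derive_mult P Q x (P1 x) (Q1 x)); auto. intros; apply Rmult_comm.
  - intros x _. apply (continuous_plus (fun s => P1 s * Q s) (fun s => P s * Q1 s)).
    apply cont_mul; auto. apply (deriv_cont Q Q1 HQ).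
    apply cont_mul; auto. apply (deriv_cont P P1 HP).
Qed.

Lemma pos_zero (g : R -> R) (a b : R) : a < b -> (forall x, continuous g x) ->
  (forall x, a < x < b -> 0 <= g x) -> RInt g a b = 0 -> forall x0, a < x0 < b -> g x0 = 0.
Proof.
  intros Hab Hg Hpos Hint x0 Hx0.
  destruct (Req_dec (g x0) 0) as [E|NE]; auto. exfalso.
  assert (Hp : 0 < g x0) by (specialize (Hpos x0 Hx0); lra).
  destruct (cont_eps g x0 (Hg x0) (g x0 / 2) ltac:(lra)) as [d [Hd Hc]].
  set (c := Rmax a (x0 - d / 2)). set (e := Rmin b (x0 + d / 2)).
  assert (Hc1 : a <= c) by apply Rmax_l. assert (Hc2 : x0 - d/2 <= c) by apply Rmax_r.
  assert (Hc3 : c < x0) by (unfold c; apply Rmax_lub_lt; lra).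
  assert (He1 : e <= b) by apply Rmin_l. assert (He2 : e <= x0 + d/2) by apply Rmin_r.
  assert (He3 : x0 < e) by (unfold e; apply Rmin_glb_lt; lra).
  assert (E1 := RInt_Chasles g a c b (ex_cont a c g Hg) (ex_cont c b g Hg)).
  assert (E2 := RInt_Chasles g c e b (ex_cont c e g Hg) (ex_cont e b g Hg)).
  change (RInt g a c + RInt g c b = RInt g a b) in E1.
  change (RInt g c e + RInt g e b = RInt g c b) in E2.
  assert (I1 : 0 <= RInt g a c) by (apply RInt_ge_0; [lra| apply ex_cont; auto | intros; apply Hpos; lra]).
  assert (I3 : 0 <= RInt g e b) by (apply RInt_ge_0; [lra| apply ex_cont; auto | intros; apply Hpos; lra]).
  assert (I2 : RInt (fun _ => g x0 / 2) c e <= RInt g c e).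
  { apply RInt_le. lra. apply ex_cont; intros; apply continuous_const. apply ex_cont; auto.
    intros x Hx. assert (Hx' : Rabs (x - x0) < d) by (apply Rabs_def1; lra).
    specialize (Hc x Hx'). apply Rabs_def2 in Hc. lra. }
  rewrite RInt_const in I2. change ((e - c) * (g x0 / 2) <= RInt g c e) in I2.
  assert (0 < (e - c) * (g x0 / 2)) by (apply Rmult_lt_0_compat; lra).
  lra.
Qed.
Lemma refl_derive (P P1 : R -> R) (c : R) : (forall x, is_derive P x (P1 x)) ->
  forall x, is_derive (fun y => P (c - y)) x (- P1 (c - x)).
Proof.
  intros H x.
  replace (- P1 (c - x)) with (scal (-1) (P1 (c - x))) by (change (-1 * P1 (c - x) = - P1 (c - x)); ring).
  apply (is_derive_comp P (fun y => c - y)). apply H.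
  auto_derive; auto.
Qed.

Lemma neg_refl_derive (P P1 : R -> R) (c : R) : (forall x, is_derive P x (P1 x)) ->
  forall x, is_derive (fun y => - P (c - y)) x (P1 (c - x)).
Proof.
  intros H x. replace (P1 (c - x)) with (- - P1 (c - x)) by ring.
  apply (is_derive_opp (fun y => P (c - y))). apply refl_derive; auto.
Qed.

Lemma RInt_lin3 (A B C : R -> R) (p q r a b : R) : ex_RInt A a b -> ex_RInt B a b -> ex_RInt C a b ->
  RInt (fun s => p * A s + q * B s + r * C s) a b = p * RInt A a b + q * RInt B a b + r * RInt C a b.
Proof.
  intros HA HB HC. apply is_RInt_unique.
  apply (is_RInt_plus (fun s => p * A s + q * B s) (fun s => scal r (C s))).
  apply (is_RInt_plus (fun s => scal p (A s)) (fun s => scal q (B s))).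
  apply (is_RInt_scal A). apply (@RInt_correct R_CompleteNormedModule); auto.
  apply (is_RInt_scal B). apply (@RInt_correct R_CompleteNormedModule); auto.
  apply (is_RInt_scal C). apply (@RInt_correct R_CompleteNormedModule); auto.
Qed.
Lemma ML (t1 t2 m k f1 f2 : R) (f u u1 u2 : R -> R)
  (Ht12 : t1 < t2)
  (Hf : continuous_on_cc t1 t2 f)
  (Hu : C2_on t1 t2 u u1 u2)
  (Hstat : forall eta eta1 eta2 : R -> R, C2_on t1 t2 eta eta1 eta2 ->
      is_derive
        (fun eps : R => Itau t1 t2 m k f1 f2 f
                          (fun s => u s + eps * eta s)
                          (fun s => u1 s + eps * eta1 s))
        0 0)
  (phi phi1 phi2 : R -> R)
  (Hp : forall x, is_derive phi x (phi1 x)) (Hp1 : forall x, is_derive phi1 x (phi2 x))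
  (Hp2 : forall x, continuous phi2 x) :
  RInt (fun s => (m * u2 (clamp t1 t2 s) + k * ext t1 t2 u u1 u2 s - f (clamp t1 t2 s)) * phi s) t1 t2
  + phi t1 * (m * u1 t1 - f1) + phi t2 * (f2 - m * u1 t2) = 0.
Proof.
  destruct Hu as [Hc0 [Hc1 [Hc2 [Hd0 Hd1]]]].
  set (U := ext t1 t2 u u1 u2). set (U1 := ext t1 t2 u1 u2 (fun _ => 0)).
  set (U2 := fun s => u2 (clamp t1 t2 s)). set (Fx := fun s => f (clamp t1 t2 s)).
  assert (dU : forall x, is_derive U x (U1 x)).
  { intros x. assert (H := ext_derive t1 t2 u u1 u2 Ht12 Hd0 x).
    replace (U1 x) with (u1 (clamp t1 t2 x) + u2 (clamp t1 t2 x) * (x - clamp t1 t2 x)); auto.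
    unfold U1, ext. field. }
  assert (dU1 : forall x, is_derive U1 x (U2 x)).
  { intros x. assert (H := ext_derive t1 t2 u1 u2 (fun _ => 0) Ht12 Hd1 x).
    replace (U2 x) with (u2 (clamp t1 t2 x) + 0 * (x - clamp t1 t2 x)); auto.
    unfold U2. ring. }
  assert (cU : forall x, continuous U x) by (apply (deriv_cont U U1 dU)).
  assert (cU1 : forall x, continuous U1 x) by (apply (deriv_cont U1 U2 dU1)).
  assert (cU2 : forall x, continuous U2 x) by (apply clamp_cont; auto; lra).
  assert (cF : forall x, continuous Fx x) by (apply clamp_cont; auto; lra).
  assert (eU : forall s, t1 <= s <= t2 -> u s = U s) by (intros; unfold U; rewrite ext_in; auto).
  assert (eU1 : forall s, t1 <= s <= t2 -> u1 s = U1 s) by (intros; unfold U1; rewrite ext_in; auto).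
  assert (eF : forall s, t1 <= s <= t2 -> f s = Fx s) by (intros; unfold Fx; rewrite clamp_in; auto).
  set (T := t1 + t2).
  set (eta := fun x => phi (T - x)). set (eta1 := fun x => - phi1 (T - x)).
  set (eta2 := fun x => phi2 (T - x)).
  assert (de : forall x, is_derive eta x (eta1 x)) by (apply refl_derive; auto).
  assert (de1 : forall x, is_derive eta1 x (eta2 x)) by (apply neg_refl_derive; auto).
  assert (ce : forall x, continuous eta x) by (apply (deriv_cont eta eta1 de)).
  assert (ce1 : forall x, continuous eta1 x) by (apply (deriv_cont eta1 eta2 de1)).
  assert (ce2 : forall x, continuous eta2 x) by (apply cont_reflc; auto).
  assert (HC2 : C2_on t1 t2 eta eta1 eta2).
  { repeat split; try apply cont_cc_of; auto; apply deriv_cc_of; auto. }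
  specialize (Hstat eta eta1 eta2 HC2).
  set (P0 := m / 2 * conv t1 t2 U1 U1 + k / 2 * conv t1 t2 U U - conv t1 t2 Fx U - f1 * U t2 + f2 * U t1).
  set (P1 := m / 2 * (conv t1 t2 U1 eta1 + conv t1 t2 eta1 U1) + k / 2 * (conv t1 t2 U eta + conv t1 t2 eta U)
             - conv t1 t2 Fx eta - f1 * eta t2 + f2 * eta t1).
  set (P2 := m / 2 * conv t1 t2 eta1 eta1 + k / 2 * conv t1 t2 eta eta).
  assert (Hexp : forall e, P0 + e * P1 + e ^ 2 * P2 = Itau t1 t2 m k f1 f2 f
                          (fun s => u s + e * eta s) (fun s => u1 s + e * eta1 s)).
  { intros e. unfold Itau.
    rewrite (conv_ext t1 t2 (fun s => u1 s + e * eta1 s) (fun s => U1 s + e * eta1 s)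
                            (fun s => u1 s + e * eta1 s) (fun s => U1 s + e * eta1 s)) by (auto; intros; rewrite eU1; auto).
    rewrite (conv_ext t1 t2 (fun s => u s + e * eta s) (fun s => U s + e * eta s)
                            (fun s => u s + e * eta s) (fun s => U s + e * eta s)) by (auto; intros; rewrite eU; auto).
    rewrite (conv_ext t1 t2 f Fx (fun s => u s + e * eta s) (fun s => U s + e * eta s)) by (auto; intros; rewrite ?eU, ?eF; auto).
    rewrite !conv_quad by auto. rewrite conv_lin_r by auto.
    rewrite (eU t1), (eU t2) by lra.
    unfold P0, P1, P2. field. }
  assert (HP1 : P1 = 0).
  { assert (H1 : is_derive (fun e => P0 + e * P1 + e ^ 2 * P2) 0 P1) by (auto_derive; auto; ring).
    apply (is_derive_ext _ (fun e => P0 + e * P1 + e ^ 2 * P2)) in Hstat.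
    apply is_derive_unique in H1. apply is_derive_unique in Hstat. rewrite <- H1. exact Hstat.
    intros; rewrite Hexp; reflexivity. }
  assert (E1 : conv t1 t2 U1 eta1 = - RInt (fun s => U1 s * phi1 s) t1 t2).
  { unfold conv, eta1, T. rewrite (RInt_extR _ (fun s => -1 * (U1 s * phi1 s))).
    rewrite RInt_scalR. ring. apply ex_cont; intros; apply cont_mul; auto. apply (deriv_cont phi1 phi2 Hp1).
    intros x. replace (t1 + t2 - (t1 + t2 - x)) with x by ring. ring. }
  assert (E2 : conv t1 t2 eta1 U1 = - RInt (fun s => U1 s * phi1 s) t1 t2).
  { unfold conv, eta1, T.
    transitivity (RInt (fun s => (fun y => - phi1 y * U1 y) (t1 + t2 - s)) t1 t2). reflexivity.
    rewrite (RInt_refl t1 t2 (fun y => - phi1 y * U1 y)). rewrite (RInt_extR _ (fun s => -1 * (U1 s * phi1 s))).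
    rewrite RInt_scalR. ring. apply ex_cont; intros; apply cont_mul; auto. apply (deriv_cont phi1 phi2 Hp1).
    intros; ring.
    intros x. apply (continuous_mult (fun y => - phi1 y) U1); auto.
    apply (continuous_opp phi1). apply (deriv_cont phi1 phi2 Hp1). }
  assert (E3 : conv t1 t2 U eta = RInt (fun s => U s * phi s) t1 t2).
  { unfold conv, eta, T. apply RInt_extR. intros x. replace (t1 + t2 - (t1 + t2 - x)) with x by ring. ring. }
  assert (E4 : conv t1 t2 eta U = RInt (fun s => U s * phi s) t1 t2).
  { unfold conv, eta, T.
    transitivity (RInt (fun s => (fun y => phi y * U y) (t1 + t2 - s)) t1 t2). reflexivity.
    rewrite (RInt_refl t1 t2 (fun y => phi y * U y)). apply RInt_extR. intros; ring.
    intros x. apply cont_mul; auto. apply (deriv_cont phi phi1 Hp). }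
  assert (E5 : conv t1 t2 Fx eta = RInt (fun s => Fx s * phi s) t1 t2).
  { unfold conv, eta, T. apply RInt_extR. intros x. replace (t1 + t2 - (t1 + t2 - x)) with x by ring. ring. }
  assert (E6 : eta t2 = phi t1) by (unfold eta, T; f_equal; ring).
  assert (E7 : eta t1 = phi t2) by (unfold eta, T; f_equal; ring).
  assert (cphi : forall x, continuous phi x) by apply (deriv_cont phi phi1 Hp).
  assert (cphi1 : forall x, continuous phi1 x) by apply (deriv_cont phi1 phi2 Hp1).
  assert (Hparts := parts U1 U2 phi phi1 t1 t2 dU1 Hp cU2 cphi1).
  rewrite (RInt_extR _ (fun s => U2 s * phi s + 1 * (U1 s * phi1 s))) in Hparts by (intros; ring).
  rewrite RInt_lin in Hparts by (apply ex_cont; intros; apply cont_mul; auto).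
  rewrite (RInt_extR _ (fun s => m * (U2 s * phi s) + k * (U s * phi s) + (-1) * (Fx s * phi s)))
    by (intros; unfold U2, Fx; ring).
  rewrite RInt_lin3 by (apply ex_cont; intros; apply cont_mul; auto).
  rewrite <- (eU1 t1), <- (eU1 t2) in Hparts by lra.
  unfold P1 in HP1. rewrite E1, E2, E3, E4, E5, E6, E7 in HP1.
  assert (HR : RInt (fun s => U2 s * phi s) t1 t2 =
     u1 t2 * phi t2 - u1 t1 * phi t1 - RInt (fun s => U1 s * phi1 s) t1 t2) by lra.
  rewrite HR. rewrite <- HP1. field.
Qed.
Lemma is_derive_val (f : R -> R) (x l l' : R) : is_derive f x l -> l = l' -> is_derive f x l'.
Proof. intros H E; subst; auto. Qed.

Lemma RInt_zero (g : R -> R) (a b : R) : a < b -> (forall s, a < s < b -> g s = 0) -> RInt g a b = 0.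
Proof.
  intros Hab H. rewrite (RInt_ext g (fun _ => 0)). rewrite RInt_const. change ((b - a) * 0 = 0). ring.
  rewrite Rmin_left, Rmax_right by lra. auto.
Qed.

Theorem proposition3
  (t1 t2 m k f1 f2 : R) (f u u1 u2 : R -> R)
  (Ht1 : 0 <= t1) (Ht12 : t1 < t2) (Hm : 0 < m) (Hk : 0 < k)
  (Hf : continuous_on_cc t1 t2 f)
  (Hu : C2_on t1 t2 u u1 u2)
  (Hstat : forall eta eta1 eta2 : R -> R, C2_on t1 t2 eta eta1 eta2 ->
      is_derive
        (fun eps : R => Itau t1 t2 m k f1 f2 f
                          (fun s => u s + eps * eta s)
                          (fun s => u1 s + eps * eta1 s))
        0 0) :
  (forall s, t1 < s < t2 -> m * u2 s + k * u s = f s) /\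
  u1 t1 = f1 / m /\ u1 t2 = f2 / m.
Proof.
  assert (HML := ML t1 t2 m k f1 f2 f u u1 u2 Ht12 Hf Hu Hstat).
  destruct Hu as [Hc0 [Hc1 [Hc2 [Hd0 Hd1]]]].
  set (H := fun s => m * u2 (clamp t1 t2 s) + k * ext t1 t2 u u1 u2 s - f (clamp t1 t2 s)).
  assert (cU : forall x, continuous (ext t1 t2 u u1 u2) x).
  { apply (deriv_cont _ (fun x => u1 (clamp t1 t2 x) + u2 (clamp t1 t2 x) * (x - clamp t1 t2 x))).
    apply ext_derive; auto. }
  assert (cH : forall x, continuous H x).
  { intros x. unfold H.
    apply (continuous_minus (fun s => m * u2 (clamp t1 t2 s) + k * ext t1 t2 u u1 u2 s) (fun s => f (clamp t1 t2 s))).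
    apply (continuous_plus (fun s => m * u2 (clamp t1 t2 s)) (fun s => k * ext t1 t2 u u1 u2 s)).
    apply (continuous_mult (fun _ => m) (fun s => u2 (clamp t1 t2 s))). apply continuous_const.
    apply clamp_cont; auto; lra.
    apply (continuous_mult (fun _ => k) (ext t1 t2 u u1 u2)). apply continuous_const. auto.
    apply clamp_cont; auto; lra. }
  assert (Hint : forall s, t1 < s < t2 -> H s = 0).
  { set (K1 := fun s => RInt H t1 s).
    assert (dK1 : forall x, is_derive K1 x (H x)).
    { intros x. apply (is_derive_RInt _ _ t1); auto. exists (mkposreal 1 Rlt_0_1). intros y _.
      apply (@RInt_correct R_CompleteNormedModule). apply ex_cont; auto. }
    set (K := fun s => RInt K1 t1 s).
    assert (cK1 : forall x, continuous K1 x) by apply (deriv_cont K1 H dK1).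
    assert (dK : forall x, is_derive K x (K1 x)).
    { intros x. apply (is_derive_RInt _ _ t1); auto. exists (mkposreal 1 Rlt_0_1). intros y _.
      apply (@RInt_correct R_CompleteNormedModule). apply ex_cont; auto. }
    set (phi := fun s => K s - K t2 * (s - t1) / (t2 - t1)).
    set (phi1 := fun s => K1 s - K t2 / (t2 - t1)).
    assert (dphi : forall x, is_derive phi x (phi1 x)).
    { intros x. apply (is_derive_val _ _ (minus (K1 x) (K t2 / (t2 - t1)))).
      apply (is_derive_minus K (fun s => K t2 * (s - t1) / (t2 - t1))). auto.
      auto_derive. auto. field. lra. reflexivity. }
    assert (dphi1 : forall x, is_derive phi1 x (H x)).
    { intros x. apply (is_derive_val _ _ (minus (H x) 0)).
      apply (is_derive_minus K1 (fun s => K t2 / (t2 - t1))). auto.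
      auto_derive; auto. change (H x - 0 = H x). ring. }
    assert (cphi1 : forall x, continuous phi1 x) by apply (deriv_cont phi1 H dphi1).
    specialize (HML phi phi1 H dphi dphi1 cH).
    assert (P1 : phi t1 = 0).
    { unfold phi, K. rewrite RInt_point. change (0 - RInt K1 t1 t2 * (t1 - t1) / (t2 - t1) = 0). field. lra. }
    assert (P2 : phi t2 = 0).
    { unfold phi. field. lra. }
    rewrite P1, P2 in HML.
    assert (I0 : RInt (fun s => H s * phi s) t1 t2 = 0) by (change (RInt (fun s => H s * phi s) t1 t2 + 0 * (m * u1 t1 - f1) + 0 * (f2 - m * u1 t2) = 0) in HML; lra).
    assert (Hp := parts phi1 H phi phi1 t1 t2 dphi1 dphi cH cphi1).
    rewrite P1, P2 in Hp.
    rewrite (RInt_extR _ (fun s => H s * phi s + 1 * (phi1 s * phi1 s))) in Hp by (intros; ring).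
    rewrite RInt_lin in Hp. 2: apply ex_cont; intros; apply cont_mul; auto; apply (deriv_cont phi phi1 dphi).
    2: apply ex_cont; intros; apply cont_mul; auto.
    assert (I1 : RInt (fun s => phi1 s * phi1 s) t1 t2 = 0) by lra.
    assert (Z : forall s, t1 < s < t2 -> phi1 s * phi1 s = 0).
    { apply pos_zero; auto. intros; apply cont_mul; auto. intros; apply Rle_0_sqr. }
    intros s0 Hs0.
    assert (L : locally s0 (fun t => 0 = phi1 t)).
    { assert (Hr : 0 < Rmin (s0 - t1) (t2 - s0)) by (apply Rmin_pos; lra).
      exists (mkposreal _ Hr). intros y Hy. assert (Hy' : Rabs (y - s0) < Rmin (s0 - t1) (t2 - s0)) by exact Hy.
      apply Rabs_lt_between in Hy'. assert (Hm1 := Rmin_l (s0 - t1) (t2 - s0)). assert (Hm2 := Rmin_r (s0 - t1) (t2 - s0)).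
      assert (Zy := Z y ltac:(lra)). apply Rmult_integral in Zy. destruct Zy; lra. }
    assert (D0 : is_derive phi1 s0 0) by (apply (is_derive_ext_loc (fun _ => 0)); auto; auto_derive; auto).
    apply is_derive_unique in D0. assert (D1 := is_derive_unique _ _ _ (dphi1 s0)). rewrite <- D1, D0. reflexivity. }
  assert (B1 := HML (fun _ => 1) (fun _ => 0) (fun _ => 0)
     ltac:(intros; auto_derive; auto) ltac:(intros; auto_derive; auto) ltac:(intros; apply continuous_const)).
  assert (B2 := HML (fun s => s) (fun _ => 1) (fun _ => 0)
     ltac:(intros; auto_derive; auto) ltac:(intros; auto_derive; auto) ltac:(intros; apply continuous_const)).
  rewrite RInt_zero in B1 by (auto; intros s Hs; change (H s * 1 = 0); rewrite Hint; auto; ring).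
  rewrite RInt_zero in B2 by (auto; intros s Hs; change (H s * s = 0); rewrite Hint; auto; ring).
  assert (EB : (t2 - t1) * (f2 - m * u1 t2) = 0) by nra.
  apply Rmult_integral in EB. destruct EB as [EB|EB]; [lra|].
  assert (EA : m * u1 t1 - f1 = 0) by lra.
  split; [|split].
  - intros s Hs. assert (Hs' := Hint s Hs). unfold H in Hs'.
    rewrite clamp_in in Hs' by lra. rewrite ext_in in Hs' by lra. lra.
  - replace f1 with (m * u1 t1) by lra. field. lra.
  - replace f2 with (m * u1 t2) by lra. field. lra.
Qed.
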